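(* Let $\mathfrak{h}$ be a separable complex Hilbert space, $C$ a self-adjoint positive operator in $\mathfrak{h}$, and $(G(t))_{t\ge0}$, $(L_\ell(t))_{t\ge0}$ ($\ell\in\mathbb{N}$) linear operators in $\mathfrak{h}$ with $\mathcal{D}(C)\subset\mathcal{D}(G(t))\cap\mathcal{D}(L_\ell(t))$, such that: (H2.1) $\|G(t)x\|^2\le K(t)\|x\|_C^2$ for all $t\ge0$, $x\in\mathcal{D}(C)$, with $K$ non-decreasing non-negative; (H2.2) for each $\ell$ there is a non-decreasing function $K_\ell$ with $\|L_\ell(t)x\|^2\le K_\ell(t)\|x\|_C^2$ for all $x\in\mathcal{D}(C)$, $t\ge0$; (H2.3) there exist a non-decreasing non-negative function $\alpha$ and a core $\mathfrak{D}_1$ of $C^2$ with $2\Re\langle C^2x,G(t)x\rangle+\sum_{\ell=1}^\infty\|CL_\ell(t)x\|^2\le\alpha(t)\|x\|_C^2$ for all $t\ge0$, $x\in\mathfrak{D}_1$. Then for every $x\in\mathcal{D}(C^2)$ and $t\ge0$: $L_\ell(t)x\in\mathcal{D}(C)$ for all $\ell\in\mathbb{N}$, and $2\Re\langle C^2x,G(t)x\rangle+\sum_{\ell=1}^\infty\|CL_\ell(t)x\|^2\le\alpha(t)\|x\|_C^2$.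
   Context: $\|x\|_C^2=\|x\|^2+\|Cx\|^2$ for $x\in\mathcal{D}(C)$. *)

(* Defs.v *)
From HB Require Import structures.
From mathcomp Require Import all_boot all_order all_algebra.
From mathcomp Require Import all_classical all_reals.
From mathcomp Require Import ereal sequences.
From mathcomp Require Import complex.

Set Implicit Arguments. Unset Strict Implicit. Unset Printing Implicit Defensive.
Import Order.TTheory GRing.Theory Num.Theory.
Local Open Scope ring_scope.
Local Open Scope classical_set_scope.

(* Convention (physics): ip is conjugate-linear in the first argument and
   linear in the second. *)

Section Hilbert.
Context {R : realType} {V : lmodType R[i]}.
Variable ip : V -> V -> R[i].

Definition is_inner_product : Prop :=
  [/\ (forall (a : R[i]) (x y z : V), ip x (a *: y + z) = a * ip x y + ip x z),
      (forall x y : V, ip y x = conjc (ip x y)),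
      (forall x : V, 0 <= ip x x) &
      (forall x : V, ip x x = 0 -> x = 0)].

Definition hnorm (x : V) : R := Num.sqrt (@complex.Re R (ip x x)).

Definition hconverges (u : nat -> V) (x : V) : Prop :=
  forall e : R, 0 < e -> exists N : nat, forall n, (N <= n)%N -> hnorm (u n - x) < e.

Definition hcauchy (u : nat -> V) : Prop :=
  forall e : R, 0 < e -> exists N : nat,
    forall m n, (N <= m)%N -> (N <= n)%N -> hnorm (u m - u n) < e.

Definition hcomplete : Prop :=
  forall u : nat -> V, hcauchy u -> exists x, hconverges u x.

Definition hdense (D : set V) : Prop :=
  forall x : V, forall e : R, 0 < e -> exists y, D y /\ hnorm (x - y) < e.

Definition hseparable : Prop := exists u : nat -> V, hdense (range u).

Definition separable_hilbert : Prop :=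
  [/\ is_inner_product, hcomplete & hseparable].

(* linear operators in V: a domain D (linear subspace) and a map A,
   linear on D (the values of A outside D are irrelevant) *)
Definition subspace (D : set V) : Prop :=
  D 0 /\ forall (a : R[i]) x y, D x -> D y -> D (a *: x + y).

Definition linop (D : set V) (A : V -> V) : Prop :=
  subspace D /\
  forall (a : R[i]) x y, D x -> D y -> A (a *: x + y) = a *: A x + A y.

(* self-adjoint: densely defined and A = A^*, i.e. the graph of A equals
   the graph of its adjoint {(y,z) | forall x in D, <Ax,y> = <x,z>} *)
Definition selfadjoint (D : set V) (A : V -> V) : Prop :=
  [/\ linop D A, hdense D &
      forall y z : V, (D y /\ A y = z) <-> (forall x, D x -> ip (A x) y = ip x z)].

Definition positive_op (D : set V) (A : V -> V) : Prop :=
  forall x, D x -> 0 <= ip x (A x).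

Definition dom_sq (D : set V) (A : V -> V) : set V := [set x | D x /\ D (A x)].

Definition is_core (D : set V) (A : V -> V) (D1 : set V) : Prop :=
  [/\ D1 `<=` D, subspace D1 &
      forall x, D x -> forall e : R, 0 < e ->
        exists y, D1 y /\ hnorm (x - y) < e /\ hnorm (A x - A y) < e].

Definition cnorm2 (C : V -> V) (x : V) : R := hnorm x ^+ 2 + hnorm (C x) ^+ 2.

End Hilbert.

Definition nondecreasing_on_pos {R : realType} (f : R -> R) : Prop :=
  forall s t : R, 0 <= s -> s <= t -> f s <= f t.

Definition nonneg_on_pos {R : realType} (f : R -> R) : Prop :=
  forall t : R, 0 <= t -> 0 <= f t.

(* Main.v *)
Require Import Defs.
From HB Require Import structures.
From mathcomp Require Import all_boot all_order all_algebra.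
From mathcomp Require Import all_classical all_reals.
From mathcomp Require Import ereal sequences.
From mathcomp Require Import complex.
From mathcomp Require Import normedtype.
From mathcomp Require Import ring lra.
Import Order.TTheory GRing.Theory Num.Theory.
Local Open Scope ring_scope.
Local Open Scope classical_set_scope.

Section IP.
Context {R : realType}.
Context {V : lmodType R[i]}.
Context {ip : V -> V -> R[i]}.
Hypothesis hip : is_inner_product ip.
Local Notation nrm := (hnorm ip).
Definition rip x y := @complex.Re R (ip x y).

Lemma ipDZ a x y z : ip x (a *: y + z) = a * ip x y + ip x z.
Proof. by case: hip. Qed.
Lemma ipC x y : ip y x = conjc (ip x y).
Proof. by case: hip. Qed.
Lemma ip_ge0 x : 0 <= ip x x.
Proof. by case: hip. Qed.
Lemma ip_eq0 x : ip x x = 0 -> x = 0.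
Proof. by case: hip => _ _ _; apply. Qed.

Lemma ip0r x : ip x 0 = 0.
Proof.
have := ipDZ 1 x 0 0; rewrite scale1r addr0 mul1r => h.
by have := congr1 (fun u => u - ip x 0) h; rewrite subrr addrK => <-.
Qed.
Lemma ipD x y z : ip x (y + z) = ip x y + ip x z.
Proof. by rewrite -[y]scale1r ipDZ mul1r scale1r. Qed.
Lemma ipZ a x y : ip x (a *: y) = a * ip x y.
Proof. by rewrite -[a *: y]addr0 ipDZ ip0r addr0. Qed.
Lemma ipN x y : ip x (- y) = - ip x y.
Proof. by rewrite -scaleN1r ipZ mulN1r. Qed.
Lemma ipB x y z : ip x (y - z) = ip x y - ip x z.
Proof. by rewrite ipD ipN. Qed.

Lemma ReJ (z : R[i]) : complex.Re (conjc z) = complex.Re z.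
Proof. by case: z. Qed.
Lemma ReM_real (r : R) (z : R[i]) : complex.Re ((r%:C)%C * z) = r * complex.Re z.
Proof. by case: z => a b /=; ring. Qed.

Lemma rip_sym x y : rip x y = rip y x.
Proof. by rewrite /rip [ip y x]ipC ReJ. Qed.
Lemma ripD x y z : rip x (y + z) = rip x y + rip x z.
Proof. by rewrite /rip ipD raddfD. Qed.
Lemma ripN x y : rip x (- y) = - rip x y.
Proof. by rewrite /rip ipN raddfN. Qed.
Lemma ripB x y z : rip x (y - z) = rip x y - rip x z.
Proof. by rewrite ripD ripN. Qed.
Lemma ripZ (r : R) x y : rip x ((r%:C)%C *: y) = r * rip x y.
Proof. by rewrite /rip ipZ ReM_real. Qed.
Lemma ripDl x y z : rip (y + z) x = rip y x + rip z x.
Proof. by rewrite !(rip_sym _ x) ripD. Qed.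
Lemma ripNl x y : rip (- y) x = - rip y x.
Proof. by rewrite !(rip_sym _ x) ripN. Qed.
Lemma ripBl x y z : rip (y - z) x = rip y x - rip z x.
Proof. by rewrite ripDl ripNl. Qed.
Lemma ripZl (r : R) x y : rip ((r%:C)%C *: y) x = r * rip y x.
Proof. by rewrite !(rip_sym _ x) ripZ. Qed.
Lemma rip0r x : rip x 0 = 0.
Proof. by rewrite /rip ip0r. Qed.
Lemma rip0l x : rip 0 x = 0.
Proof. by rewrite rip_sym rip0r. Qed.

Lemma ipxx_real x : ip x x = ((rip x x)%:C)%C.
Proof.
have := ip_ge0 x; rewrite lecE /= => /andP[/eqP h _].
by rewrite /rip; case: (ip x x) h => a b /= ->.
Qed.
Lemma rip_ge0 x : 0 <= rip x x.
Proof. by have := ip_ge0 x; rewrite lecE => /andP[]. Qed.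
Lemma rip_eq0 x : rip x x = 0 -> x = 0.
Proof. by move=> h; apply: ip_eq0; rewrite ipxx_real h. Qed.

Lemma nrm_ge0 x : 0 <= nrm x.
Proof. exact: sqrtr_ge0. Qed.
Lemma nrm_sq x : nrm x ^+ 2 = rip x x.
Proof. by rewrite /hnorm sqr_sqrtr // rip_ge0. Qed.
Lemma nrm0 : nrm 0 = 0.
Proof. by rewrite /hnorm ip0r /= sqrtr0. Qed.
Lemma nrm_eq0 x : nrm x = 0 -> x = 0.
Proof. by move=> h; apply: rip_eq0; rewrite -nrm_sq h expr0n. Qed.

Lemma nrmD_sq x y : nrm (x + y) ^+ 2 = nrm x ^+ 2 + 2 * rip x y + nrm y ^+ 2.
Proof. rewrite !nrm_sq ripD !ripDl (rip_sym y x); ring. Qed.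
Lemma nrmN x : nrm (- x) = nrm x.
Proof. by rewrite /hnorm -!/(rip _ _) ripN ripNl opprK. Qed.

Lemma nrmZ (r : R) x : nrm ((r%:C)%C *: x) = `|r| * nrm x.
Proof.
rewrite /hnorm -/(rip _ _) ripZ ripZl mulrA -expr2 sqrtrM ?sqr_ge0 //.
by rewrite sqrtr_sqr.
Qed.

Lemma sqr_le_nonneg (b m : R) : 0 <= m -> b ^+ 2 <= m ^+ 2 -> b <= m.
Proof. move=> ? ?; nra. Qed.

Lemma CS x y : rip x y <= nrm x * nrm y.
Proof.
apply: sqr_le_nonneg; first by rewrite mulr_ge0 ?nrm_ge0.
have [y0|] := eqVneq y 0.
  by rewrite y0 rip0r nrm0 mulr0 expr0n /= lexx.
move=> ny0.
have c0 : 0 < nrm y ^+ 2.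
  rewrite lt_def sqr_ge0 andbT sqrf_eq0; apply/eqP => /nrm_eq0 h.
  by rewrite h eqxx in ny0.
set t := rip x y / nrm y ^+ 2.
have := sqr_ge0 (nrm (x + (- t)%:C%C *: y)).
rewrite nrmD_sq ripZ nrmZ exprMn normrN => h.
have nt : `|t| ^+ 2 = t ^+ 2 by rewrite -normrX ger0_norm // sqr_ge0.
rewrite nt in h; rewrite exprMn.
have ht : t * nrm y ^+ 2 = rip x y by rewrite /t divfK // gt_eqF.
nra.
Qed.

Lemma CS_abs x y : `|rip x y| <= nrm x * nrm y.
Proof.
rewrite ler_norml CS andbT lerNl -ripN.
by apply: le_trans (CS _ _) _; rewrite nrmN.
Qed.

Lemma nrm_triangle x y : nrm (x + y) <= nrm x + nrm y.
Proof.
apply: sqr_le_nonneg; first by rewrite addr_ge0 ?nrm_ge0.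
rewrite nrmD_sq; have := CS x y; nra.
Qed.

Lemma nrmB_sym x y : nrm (x - y) = nrm (y - x).
Proof. by rewrite -nrmN opprB. Qed.

Lemma nrm_sub_le x y : nrm x <= nrm y + nrm (x - y).
Proof. by apply: le_trans (nrm_triangle _ _); rewrite addrC subrK. Qed.


Lemma ipZl a x y : ip (a *: x) y = conjc a * ip x y.
Proof. by rewrite ipC ipZ rmorphM /= -ipC. Qed.
Lemma Re_conj_i (p : R[i]) : complex.Re (conjc 'i%C * p) = complex.Im p.
Proof. by case: p => a b /=; ring. Qed.
Lemma complex_eq (p q : R[i]) : complex.Re p = complex.Re q ->
  complex.Im p = complex.Im q -> p = q.
Proof. by case: p => a b; case: q => c d /= -> ->. Qed.
End IP.

Lemma archi_inv {R : realType} {c : R} : 0 < c ->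
  exists N : nat, forall n, (N <= n)%N -> 1 / (n.+1%:R) < c.
Proof.
move=> c0; exists (Num.trunc (1 / c)) => n hn.
have h1 := truncnS_gt (1 / c).
have h2 : (Num.trunc (1 / c)).+1%:R <= n.+1%:R :> R by rewrite ler_nat ltnS.
have h3 : 1 / c < n.+1%:R by apply: lt_le_trans h1 h2.
rewrite ltr_pdivrMr ?ltr0Sn //.
by rewrite ltr_pdivrMr // in h3; rewrite mulrC.
Qed.

Lemma le_small {R : realType} (a b c : R) : 0 <= c ->
  (forall t, 0 < t -> a <= b + t * c) -> a <= b.
Proof.
move=> c0 h; apply/ler_addgt0Pr => e e0.
apply: le_trans (h (e / (c + 1)) _) _; first by rewrite divr_gt0 // ltr_wpDl.
rewrite lerD2l mulrAC ler_pdivrMr ?ltr_wpDl //; nra.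
Qed.

Section Riesz.
Context {R : realType}.
Context {V : lmodType R[i]}.
Context {ip : V -> V -> R[i]}.
Hypothesis hip : is_inner_product ip.
Hypothesis hcomp : hcomplete ip.
Local Notation nrm := (hnorm ip).
Local Notation rip := (@rip _ _ ip).

Lemma sub_Z {D : set V} {a : R[i]} {x} : Defs.subspace D -> D x -> D (a *: x).
Proof. by move=> [D0 DZ] Dx; rewrite -[a *: x]addr0; apply: DZ. Qed.
Lemma sub_D {D : set V} {x y} : Defs.subspace D -> D x -> D y -> D (x + y).
Proof. by move=> [D0 DZ] Dx Dy; rewrite -[x]scale1r; apply: DZ. Qed.
Lemma sub_N {D : set V} {x} : Defs.subspace D -> D x -> D (- x).
Proof. by move=> hD Dx; rewrite -scaleN1r; apply: sub_Z. Qed.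
Lemma sub_B {D : set V} {x y} : Defs.subspace D -> D x -> D y -> D (x - y).
Proof. by move=> hD Dx Dy; apply: sub_D => //; apply: sub_N. Qed.

Lemma paral x y : nrm (x - y) ^+ 2 = 2 * nrm x ^+ 2 + 2 * nrm y ^+ 2 - nrm (x + y) ^+ 2.
Proof.
rewrite !nrmD_sq // nrmN // ripN //; ring.
Qed.

Lemma riesz (D : set V) (f : V -> R) (M : R) : Defs.subspace D -> 0 <= M ->
  (forall (r : R) x y, D x -> D y -> f ((r%:C)%C *: x + y) = r * f x + f y) ->
  (forall x, D x -> f x <= M * nrm x) ->
  exists z, forall v, D v -> f v = rip v z.
Proof.
move=> hD M0 flin fb.
have f0 : f 0 = 0.
  have := flin 1 0 0; rewrite scale1r addr0 mul1r => h.
  have {}h := h (proj1 hD) (proj1 hD).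
  by have := congr1 (fun u => u - f 0) h; rewrite subrr addrK => <-.
have fZ r x : D x -> f ((r%:C)%C *: x) = r * f x.
  by move=> Dx; rewrite -[_ *: x]addr0 flin // ?f0 ?addr0 //; case: hD.
have fD x y : D x -> D y -> f (x + y) = f x + f y.
  by move=> Dx Dy; have := flin 1 x y Dx Dy; rewrite rmorph1 scale1r mul1r.
have fN x : D x -> f (- x) = - f x.
  by move=> Dx; have := fZ (-1) x Dx; rewrite rmorphN1 scaleN1r mulN1r.
pose S := [set y | exists2 w, D w /\ nrm w <= 1 & f w = y].
have S0 : S 0 by exists 0; rewrite ?nrm0 //; split; [case: hD|].
have hS : has_sup S.
  split; first by exists 0.
  exists M => y [w [Dw nw] <-]; apply: le_trans (fb _ Dw) _.
  by rewrite ler_piMr.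
set s := sup S.
have s0 : 0 <= s by apply: ub_le_sup => //; case: hS.
have fs w : D w -> f w <= s * nrm w.
  move=> Dw; have [n0|nn0] := eqVneq (nrm w) 0.
    by rewrite (nrm_eq0 hip _ n0) f0 nrm0 // mulr0.
  have np : 0 < nrm w by rewrite lt_def nn0 nrm_ge0.
  have : S (f (((nrm w)^-1)%:C%C *: w)).
    exists (((nrm w)^-1)%:C%C *: w) => //; split; first exact: sub_Z.
    by rewrite nrmZ // ger0_norm ?invr_ge0 ?nrm_ge0 // mulVf.
  move=> /(ub_le_sup (proj2 hS)); rewrite fZ // => h.
  by have := ler_wpM2r (@nrm_ge0 _ _ ip w) h; rewrite /= mulrAC mulVf // mul1r.
have [s_eq0|s_neq0] := eqVneq s 0.
  exists 0 => v Dv; rewrite (rip0r hip); apply/eqP; rewrite eq_le.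
  have := fs v Dv; have := fs (- v) (sub_N hD Dv); rewrite fN // s_eq0 !mul0r.
  by move=> h1 h2; apply/andP; split; lra.
have sp : 0 < s by rewrite lt_def s_neq0.
have /choice [w hw] : forall n : nat, exists w, (D w /\ nrm w <= 1) /\ s - 1 / n.+1%:R < f w.
  move=> n; have e0 : 0 < 1 / n.+1%:R :> R by rewrite divr_gt0 ?ltr0Sn.
  have [y [w hw <-] hy] := sup_adherent e0 hS.
  by exists w.
pose e n : R := 1 / n.+1%:R.
have e0 n : 0 < e n by rewrite divr_gt0 ?ltr0Sn.
have e_le n m : (m <= n)%N -> e n <= e m.
  by move=> hmn; rewrite /e !div1r lef_pV2 ?posrE ?ltr0Sn // ler_nat ltnS.
have Dw n : D (w n) by case: (hw n) => [[]].
have nw n : nrm (w n) <= 1 by case: (hw n) => [[]].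
have fw n : s - e n < f (w n) by case: (hw n).
have nw0 n : 0 <= nrm (w n) by apply: nrm_ge0.
have cb n m : s * nrm (w n - w m) ^+ 2 <= 4 * (e n + e m).
  have h1 := fs _ (sub_D hD (Dw n) (Dw m)); rewrite fD // in h1.
  have h2 := fw n; have h3 := fw m.
  have h4 := nrm_triangle hip (w n) (w m).
  have h5 := nw n; have h6 := nw m.
  have h7 : 0 <= nrm (w n + w m) by apply: nrm_ge0.
  have h8 := e0 n; have h9 := e0 m.
  rewrite (paral _ _).
  set q := nrm (w n + w m) in h1 h4 h7 *.
  have [q2|q2] := lerP q 2.
    have h10 : s * (2 - q) <= e n + e m by lra.
    have h11 : s * (2 - q) * (2 + q) <= (e n + e m) * (2 + q) by apply: ler_wpM2r => //; lra.
    have h12 : (e n + e m) * (2 + q) <= (e n + e m) * 4 by apply: ler_wpM2l => //; lra.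
    have a2 : nrm (w n) ^+ 2 <= 1 by rewrite expr_le1.
    have b2 : nrm (w m) ^+ 2 <= 1 by rewrite expr_le1.
    have h13 : s * (2 * nrm (w n) ^+ 2 + 2 * nrm (w m) ^+ 2 - q ^+ 2) <= s * (4 - q ^+ 2).
      by apply: ler_wpM2l => //; lra.
    nra.
  have a2 : nrm (w n) ^+ 2 <= 1 by rewrite expr_le1.
  have b2 : nrm (w m) ^+ 2 <= 1 by rewrite expr_le1.
  have h13 : s * (2 * nrm (w n) ^+ 2 + 2 * nrm (w m) ^+ 2 - q ^+ 2) <= s * (4 - q ^+ 2).
    by apply: ler_wpM2l => //; lra.
  have h14 : s * (4 - q ^+ 2) <= 0 by rewrite pmulr_rle0 //; nra.
  nra.
have cauchy : hcauchy ip w.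
  move=> eps eps0.
  have c0 : 0 < eps ^+ 2 * s / 8 by rewrite !mulr_gt0 ?exprn_gt0 ?invr_gt0.
  have [N hN] := archi_inv c0.
  exists N => n m hn hm.
  have := cb n m; have := e_le _ _ hn; have := e_le _ _ hm; have := hN N (leqnn N).
  rewrite -/(e N) => h1 h2 h3 h4.
  have h5 : s * nrm (w n - w m) ^+ 2 < s * eps ^+ 2.
    apply: le_lt_trans h4 _.
    have : 4 * (e n + e m) <= 8 * e N by lra.
    move/le_lt_trans; apply.
    by rewrite ltr_pdivlMr // mulrC in h1; rewrite (mulrC s); lra.
  rewrite ltr_pM2l // in h5.
  have := nrm_ge0 (ip:=ip) (w n - w m); nra.
have [wl hwl] := hcomp _ cauchy.
have nwl : nrm wl <= 1.
  apply/ler_addgt0Pr => eps eps0.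
  have [N hN] := hwl eps eps0.
  have := nrm_sub_le hip wl (w N); rewrite nrmB_sym //.
  have := hN N (leqnn N); have := nw N; lra.
have key v t : D v -> 0 < t -> s + t * f v <= s * nrm (wl + (t%:C)%C *: v).
  move=> Dv t0; apply/ler_addgt0Pr => eps eps0.
  have eps2 : 0 < eps / 2 by rewrite divr_gt0.
  have [N1 hN1] := archi_inv eps2.
  have eps3 : 0 < eps / (2 * s) by rewrite divr_gt0 ?mulr_gt0.
  have [N2 hN2] := hwl _ eps3.
  pose n := maxn N1 N2.
  have h1 := hN1 n (leq_maxl _ _); have h2 := hN2 n (leq_maxr _ _).
  have h3 := fs (w n + (t%:C)%C *: v) (sub_D hD (Dw n) (sub_Z hD Dv)).
  have h4 := nrm_sub_le hip (w n + (t%:C)%C *: v) (wl + (t%:C)%C *: v).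
  have e4 : w n + (t%:C)%C *: v - (wl + (t%:C)%C *: v) = w n - wl.
    by rewrite opprD addrACA subrr addr0.
  rewrite e4 in h4.
  have h5 : s * nrm (w n - wl) <= eps / 2.
    by rewrite ltr_pdivlMr ?mulr_gt0 // in h2; rewrite mulrC ler_pdivlMr //; lra.
  have h6 := fw n.
  rewrite fD ?fZ // in h3; last exact: sub_Z.
  have h7 : s * nrm (w n + (t%:C)%C *: v) <= s * nrm (wl + (t%:C)%C *: v) + s * nrm (w n - wl).
    by rewrite -mulrDr ler_wpM2l.
  rewrite /e /= in h6; move: h1 h6 h3 h7 h5; clear; set a := 1 / _; set b := s * nrm _; set c := s * nrm _; set d := s * nrm _; lra.
have half v : D v -> f v <= s * rip wl v.
  move=> Dv.
  apply: (@le_small _ _ _ (s * nrm v ^+ 2 / 2)).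
    by rewrite divr_ge0 // mulr_ge0 // sqr_ge0.
  move=> t t0.
  have h1 := key v t Dv t0.
  have h2 : nrm (wl + (t%:C)%C *: v) ^+ 2 = nrm wl ^+ 2 + 2 * (t * rip wl v) + t ^+ 2 * nrm v ^+ 2.
    by rewrite nrmD_sq // ripZ // nrmZ // exprMn -normrX ger0_norm // sqr_ge0.
  have h3 : nrm (wl + (t%:C)%C *: v) <= 1 + t * rip wl v + t ^+ 2 * nrm v ^+ 2 / 2.
    apply: sqr_le_nonneg.
      have := sqr_ge0 (nrm (wl + (t%:C)%C *: v)); rewrite h2.
      have := nrm_ge0 (ip:=ip) wl; nra.
    rewrite h2; have := nrm_ge0 (ip:=ip) wl; have := sqr_ge0 (t * nrm v ^+ 2 / 2 + rip wl v).
    nra.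
  have h4 : s * nrm (wl + (t%:C)%C *: v) <= s * (1 + t * rip wl v + t ^+ 2 * nrm v ^+ 2 / 2).
    by rewrite ler_wpM2l.
  nra.
exists ((s%:C)%C *: wl) => v Dv.
rewrite ripZ // rip_sym //.
apply/eqP; rewrite eq_le half //=.
have := half _ (sub_N hD Dv); rewrite fN // ripN //; lra.
Qed.
End Riesz.

Lemma series_le {R : realType} (u : nat -> R) (b : R) : (forall n, 0 <= u n) ->
  (forall N, \sum_(0 <= l < N) u l <= b) ->
  (\sum_(0 <= l <oo) (u l)%:E <= b%:E)%E.
Proof.
move=> u0 hb; apply: lime_le.
  by apply: is_cvg_nneseries => n _ _; rewrite lee_fin.
by apply: nearW => N; rewrite sumEFin lee_fin.
Qed.

Lemma partial_le {R : realType} (u : nat -> R) N : (forall n, 0 <= u n) ->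
  ((\sum_(0 <= l < N) u l)%:E <= \sum_(0 <= l <oo) (u l)%:E)%E.
Proof.
by move=> u0; rewrite -sumEFin; apply: nneseries_lim_ge => n _ _; rewrite lee_fin.
Qed.

Section Ops.
Context {R : realType} {V : lmodType R[i]}.

Lemma lin0 {D : set V} {A} : linop D A -> A 0 = 0.
Proof.
move=> [[D0 _] hA]; have := hA 1 0 0 D0 D0; rewrite scale1r addr0 scale1r => h.
by have := congr1 (fun u => u - A 0) h; rewrite subrr addrK => <-.
Qed.
Lemma linD {D : set V} {A x y} : linop D A -> D x -> D y -> A (x + y) = A x + A y.
Proof. by move=> [hD hA] Dx Dy; have := hA 1 x y Dx Dy; rewrite !scale1r. Qed.
Lemma linZ {D : set V} {A} a {x} : linop D A -> D x -> A (a *: x) = a *: A x.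
Proof.
move=> hl Dx; have [[D0 _] hA] := hl.
by have := hA a x 0 Dx D0; rewrite !addr0 (lin0 hl) addr0.
Qed.
Lemma linB {D : set V} {A x y} : linop D A -> D x -> D y -> A (x - y) = A x - A y.
Proof.
move=> hl Dx Dy; have [hD hA] := hl.
rewrite (linD hl Dx (sub_N hD Dy)).
by rewrite -scaleN1r (linZ _ hl Dy) scaleN1r.
Qed.
End Ops.

Theorem lemma5p3 (R : realType) (V : lmodType R[i]) (ip : V -> V -> R[i])
  (hH : separable_hilbert ip)
  (DC : set V) (C : V -> V)
  (hCsa : selfadjoint ip DC C) (hCpos : positive_op ip DC C)
  (DG : R -> set V) (G : R -> V -> V)
  (DL : nat -> R -> set V) (L : nat -> R -> V -> V)
  (hG : forall t : R, 0 <= t -> linop (DG t) (G t))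
  (hL : forall (l : nat) (t : R), 0 <= t -> linop (DL l t) (L l t))
  (hDG : forall t : R, 0 <= t -> DC `<=` DG t)
  (hDL : forall (l : nat) (t : R), 0 <= t -> DC `<=` DL l t)
  (K : R -> R) (hKmon : nondecreasing_on_pos K) (hKpos : nonneg_on_pos K)
  (H21 : forall (t : R) (x : V), 0 <= t -> DC x ->
     hnorm ip (G t x) ^+ 2 <= K t * cnorm2 ip C x)
  (Kl : nat -> R -> R) (hKlmon : forall l : nat, nondecreasing_on_pos (Kl l))
  (H22 : forall (l : nat) (t : R) (x : V), 0 <= t -> DC x ->
     hnorm ip (L l t x) ^+ 2 <= Kl l t * cnorm2 ip C x)
  (alpha : R -> R) (halmon : nondecreasing_on_pos alpha) (halpos : nonneg_on_pos alpha)
  (D1 : set V) (hD1 : is_core ip (dom_sq DC C) (fun x => C (C x)) D1)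
  (H23dom : forall (l : nat) (t : R) (x : V), 0 <= t -> D1 x -> DC (L l t x))
  (H23 : forall (t : R) (x : V), 0 <= t -> D1 x ->
     ((2 * @complex.Re R (ip (C (C x)) (G t x)) : R)%:E
        + \sum_(0 <= l <oo) ((hnorm ip (C (L l t x))) ^+ 2)%:E
      <= (alpha t * cnorm2 ip C x)%:E)%E) :
  forall (t : R) (x : V), 0 <= t -> dom_sq DC C x ->
    (forall l : nat, DC (L l t x)) /\
    ((2 * @complex.Re R (ip (C (C x)) (G t x)) : R)%:E
        + \sum_(0 <= l <oo) ((hnorm ip (C (L l t x))) ^+ 2)%:E
      <= (alpha t * cnorm2 ip C x)%:E)%E.
Proof.
move=> t x t0 [DCx DCCx].
have [hip hcomp _] := hH.
have [Clin Cdense Csa] := hCsa.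
have hDC : Defs.subspace DC by case: Clin.
have [sub1 subsp1 dense1] := hD1.
have Csym u v : DC u -> DC v -> ip (C u) v = ip u (C v).
  by move=> Du Dv; exact: (proj1 (Csa v (C v)) (conj Dv erefl)) u Du.
have CCb u : DC u -> DC (C u) -> hnorm ip (C u) ^+ 2 <= hnorm ip u * hnorm ip (C (C u)).
  move=> Du DCu; rewrite (nrm_sq hip) /rip Csym //; exact: (CS hip).
pose Near (P : V -> Prop) := exists2 eta : R, 0 < eta & forall y, D1 y ->
  hnorm ip (x - y) < eta -> hnorm ip (C (C x) - C (C y)) < eta -> P y.
have Near_and P Q : Near P -> Near Q -> Near (fun y => P y /\ Q y).
  move=> [e1 e10 h1] [e2 e20 h2]; exists (Num.min e1 e2); first by rewrite lt_min e10.
  by move=> y Dy; rewrite !lt_min => /andP[a b] /andP[c d]; split; [apply: h1|apply: h2].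
have Near_ex P : Near P -> exists y, D1 y /\ P y.
  move=> [e e0 h]; have [y [Dy [a b]]] := dense1 x (conj DCx DCCx) e e0.
  by exists y; split => //; apply: h.
have Near_small th : 0 < th -> Near (fun y => [/\ hnorm ip (x - y) < th,
   hnorm ip (C x - C y) < th & hnorm ip (C (C x) - C (C y)) < th]).
  move=> th0; exists th => // y Dy h1 h2; split => //.
  have [DCy DCCy] := sub1 y Dy.
  have Du : DC (x - y) := sub_B hDC DCx DCy.
  have eCu : C (x - y) = C x - C y := linB Clin DCx DCy.
  have DCu : DC (C x - C y) := sub_B hDC DCCx DCCy.
  have eCCu : C (C x - C y) = C (C x) - C (C y) := linB Clin DCCx DCCy.
  have := CCb _ Du; rewrite eCu eCCu => /(_ DCu) h3.
  have := nrm_ge0 (ip:=ip) (x - y); have := nrm_ge0 (ip:=ip) (C x - C y).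
  have := nrm_ge0 (ip:=ip) (C (C x) - C (C y)); nra.
have Near_op (DA : set V) (A : V -> V) (k : R) : linop DA A -> DC `<=` DA ->
    (forall w, DC w -> hnorm ip (A w) ^+ 2 <= k * cnorm2 ip C w) ->
    forall eta, 0 < eta -> Near (fun y => hnorm ip (A x - A y) < eta).
  move=> hA sA hk eta eta0.
  have k1 : 0 < `|k| + 1 by rewrite ltr_wpDl.
  pose th := eta / (2 * (`|k| + 1)).
  have th0 : 0 < th by rewrite divr_gt0 // mulr_gt0.
  have eth : th * (2 * (`|k| + 1)) = eta by rewrite /th divfK // gt_eqF // mulr_gt0.
  have [e e0 he] := Near_small th th0.
  exists e => // y Dy h1 h2; have [a b c] := he y Dy h1 h2.
  have [DCy DCCy] := sub1 y Dy.
  have Du : DC (x - y) := sub_B hDC DCx DCy.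
  have eCu : C (x - y) = C x - C y := linB Clin DCx DCy.
  rewrite -(linB hA (sA _ DCx) (sA _ DCy)).
  have := hk _ Du; rewrite /cnorm2 eCu => h3.
  have h4 : k * (hnorm ip (x - y) ^+ 2 + hnorm ip (C x - C y) ^+ 2)
         <= `|k| * (hnorm ip (x - y) ^+ 2 + hnorm ip (C x - C y) ^+ 2).
    by apply: ler_wpM2r; [rewrite addr_ge0 // sqr_ge0 | exact: ler_norm].
  have := nrm_ge0 (ip:=ip) (x - y); have := nrm_ge0 (ip:=ip) (C x - C y).
  have := nrm_ge0 (ip:=ip) (A (x - y)); have := normr_ge0 k.
  move=> n1 n2 n3 n4.
  have h5 : hnorm ip (x - y) ^+ 2 + hnorm ip (C x - C y) ^+ 2 <= 2 * th ^+ 2 by nra.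
  have h6 : `|k| * (hnorm ip (x - y) ^+ 2 + hnorm ip (C x - C y) ^+ 2) <= `|k| * (2 * th ^+ 2).
    by apply: ler_wpM2l.
  have h7 : `|k| * (2 * th ^+ 2) < eta ^+ 2 by rewrite -eth; nra.
  nra.
pose B y := alpha t * cnorm2 ip C y - 2 * complex.Re (ip (C (C y)) (G t y)).
have u0 y : forall l, 0 <= hnorm ip (C (L l t y)) ^+ 2 by move=> l; exact: sqr_ge0.
have F1 y N : D1 y -> \sum_(0 <= l < N) hnorm ip (C (L l t y)) ^+ 2 <= B y.
  move=> Dy; have := le_trans (leeD2l _ (partial_le _ N (u0 y))) (H23 t y t0 Dy).
  by rewrite -EFinD lee_fin /B => h; lra.
have F2 d : 0 < d -> Near (fun y => B y <= B x + d).
  move=> d0.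
  pose nx := hnorm ip x; pose ncx := hnorm ip (C x); pose nGx := hnorm ip (G t x).
  pose nCCx := hnorm ip (C (C x)).
  have nx0 : 0 <= nx by apply: nrm_ge0.
  have ncx0 : 0 <= ncx by apply: nrm_ge0.
  have nGx0 : 0 <= nGx by apply: nrm_ge0.
  have nCCx0 : 0 <= nCCx by apply: nrm_ge0.
  have al0 : 0 <= alpha t := halpos t t0.
  pose Q := alpha t * (2 * nx + 2 * ncx + 2) + 2 * nGx + 2 * nCCx + 2.
  have Q0 : 0 <= Q by rewrite /Q; nra.
  pose th := Num.min 1 (d / (Q + 1)).
  have th0 : 0 < th by rewrite lt_min ltr01 divr_gt0 // ltr_wpDl.
  have th1 : th <= 1 by rewrite ge_min lexx.
  have thQ : th * Q <= d.
    have : th <= d / (Q + 1) by rewrite ge_min lexx orbT.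
    rewrite ler_pdivlMr ?ltr_wpDl // => h; nra.
  have hGl := hG t t0.
  have [e e0 he] := Near_and _ _ (Near_small th th0)
     (Near_op _ _ _ hGl (hDG t t0) (fun w Dw => H21 t w t0 Dw) th th0).
  exists e => // y Dy h1 h2; have [[a b c] g] := he y Dy h1 h2.
  have [DCy DCCy] := sub1 y Dy.
  have hy1 : hnorm ip y <= nx + th.
    have := nrm_sub_le hip y x; rewrite nrmB_sym // -/nx; lra.
  have hy2 : hnorm ip (C y) <= ncx + th.
    have := nrm_sub_le hip (C y) (C x); rewrite nrmB_sym // -/ncx; lra.
  have hy3 : hnorm ip (C (C y)) <= nCCx + th.
    have := nrm_sub_le hip (C (C y)) (C (C x)); rewrite nrmB_sym // -/nCCx; lra.
  have ny0 : 0 <= hnorm ip y by apply: nrm_ge0.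
  have ncy0 : 0 <= hnorm ip (C y) by apply: nrm_ge0.
  have hc : cnorm2 ip C y <= cnorm2 ip C x + th * (2 * nx + 1) + th * (2 * ncx + 1).
    rewrite /cnorm2 -/nx -/ncx; nra.
  have hc' : alpha t * cnorm2 ip C y <= alpha t * (cnorm2 ip C x + th * (2 * nx + 1) + th * (2 * ncx + 1)).
    by apply: ler_wpM2l.
  have eR : complex.Re (ip (C (C x)) (G t x)) - complex.Re (ip (C (C y)) (G t y))
     = rip (ip:=ip) (C (C x) - C (C y)) (G t x) + rip (ip:=ip) (C (C y)) (G t x - G t y).
    rewrite (ripBl hip) (ripB hip) /rip; ring.
  have r1 : rip (ip:=ip) (C (C x) - C (C y)) (G t x) <= th * nGx.
    apply: le_trans (CS hip _ _) _; apply: ler_wpM2r => //; exact: ltW.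
  have r2 : rip (ip:=ip) (C (C y)) (G t x - G t y) <= (nCCx + th) * th.
    apply: le_trans (CS hip _ _) _; apply: ler_pM => //; [exact: nrm_ge0|exact: nrm_ge0|exact: ltW].
  have r3 : (nCCx + th) * th <= (nCCx + 1) * th by nra.
  rewrite /Q in thQ; rewrite /B /=.
  move: hc' eR r1 r2 r3 thQ; clearbody nx ncx nGx nCCx th; clear.
  move=> *; nra.
pose M := Num.sqrt (`|B x| + 1).
have M0 : 0 <= M by apply: sqrtr_ge0.
have M2 : M ^+ 2 = `|B x| + 1 by rewrite sqr_sqrtr // addr_ge0.
have NearM l : Near (fun y => hnorm ip (C (L l t y)) <= M).
  have [e e0 he] := F2 1 ltr01.
  exists e => // y Dy h1 h2; have := he y Dy h1 h2 => hB.
  have := F1 y l.+1 Dy; rewrite big_nat_recr //= => h3.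
  have h4 : 0 <= \sum_(0 <= k < l) hnorm ip (C (L k t y)) ^+ 2 by apply: sumr_ge0.
  apply: sqr_le_nonneg => //; rewrite M2.
  have := ler_norm (B x); lra.
have NearL l eta : 0 < eta -> Near (fun y => hnorm ip (L l t x - L l t y) < eta).
  move=> eta0; exact: (Near_op _ _ _ (hL l t t0) (hDL l t t0) (fun w Dw => H22 l t w t0 Dw) eta eta0).
have DCL l : DC (L l t x).
  pose f w := rip (ip:=ip) (C w) (L l t x).
  have flin (r : R) w w' : DC w -> DC w' -> f ((r%:C)%C *: w + w') = r * f w + f w'.
    move=> Dw Dw'; rewrite /f (proj2 Clin) // (ripDl hip) (ripZl hip) //.
  have fb w : DC w -> f w <= M * hnorm ip w.
    move=> Dw; apply/ler_addgt0Pr => eps eps0.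
    have cw1 : 0 < hnorm ip (C w) + 1 by rewrite ltr_wpDl // nrm_ge0.
    have eta0 : 0 < eps / (hnorm ip (C w) + 1) by rewrite divr_gt0.
    have [y [Dy [hM hLy]]] := Near_ex _ (Near_and _ _ (NearM l) (NearL l _ eta0)).
    have DLy := H23dom l t y t0 Dy.
    rewrite /f -[L l t x](subrK (L l t y)) (ripD hip) addrC.
    have e1 : rip (ip:=ip) (C w) (L l t y) = rip (ip:=ip) w (C (L l t y)) by rewrite /rip Csym.
    rewrite e1.
    have r1 : rip (ip:=ip) w (C (L l t y)) <= M * hnorm ip w.
      apply: le_trans (CS hip _ _) _; rewrite mulrC; apply: ler_wpM2r => //; exact: nrm_ge0.
    have r2 : rip (ip:=ip) (C w) (L l t x - L l t y) <= eps.
      apply: le_trans (CS hip _ _) _.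
      have r3 : hnorm ip (C w) * hnorm ip (L l t x - L l t y) <= hnorm ip (C w) * (eps / (hnorm ip (C w) + 1)).
        by apply: ler_wpM2l; [exact: nrm_ge0 | exact: ltW].
      apply: le_trans r3 _; rewrite mulrA ler_pdivrMr // mulrC ler_wpM2l //; first exact: ltW.
      by rewrite lerDl.
    lra.
  have [z hz] := riesz hip hcomp DC f M hDC M0 flin fb.
  suff [] : DC (L l t x) /\ C (L l t x) = z by [].
  apply/(Csa (L l t x) z) => w Dw.
  apply: complex_eq; first exact: hz.
  have := hz ((('i)%C) *: w) (sub_Z hDC Dw).
  rewrite /f /rip (linZ _ Clin Dw) !(ipZl hip) !Re_conj_i //.
split => //.
have LSC l eps : 0 < eps -> Near (fun y => hnorm ip (C (L l t x)) ^+ 2 - eps <= hnorm ip (C (L l t y)) ^+ 2).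
  move=> eps0.
  set zz := C (L l t x); set a := hnorm ip zz.
  have a0 : 0 <= a by apply: nrm_ge0.
  have ma : 0 < 4 * (M + a + 1) by rewrite mulr_gt0 // ltr_wpDl // addr_ge0.
  have th0 : 0 < eps / (4 * (M + a + 1)) by rewrite divr_gt0.
  have [w [Dw hw]] := Cdense zz _ th0.
  set th := eps / (4 * (M + a + 1)) in th0 hw.
  have thM : th * (M + a) <= eps / 4.
    have h : th * (4 * (M + a + 1)) = eps by rewrite /th divfK // gt_eqF.
    nra.
  have cw1 : 0 < 4 * (hnorm ip (C w) + 1) by rewrite mulr_gt0 // ltr_wpDl // nrm_ge0.
  have eta0 : 0 < eps / (4 * (hnorm ip (C w) + 1)) by rewrite divr_gt0.
  have [e e0 he] := Near_and _ _ (NearM l) (NearL l _ eta0).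
  exists e => // y Dy h1 h2; have [hM hLy] := he y Dy h1 h2.
  have DLy := H23dom l t y t0 Dy.
  set b := hnorm ip (C (L l t y)).
  have b0 : 0 <= b by apply: nrm_ge0.
  have ea : a ^+ 2 = rip (ip:=ip) (zz - w) zz + rip (ip:=ip) w zz.
    by rewrite (ripBl hip) subrK (nrm_sq hip).
  have q1 : rip (ip:=ip) (zz - w) zz <= th * a.
    apply: le_trans (CS hip _ _) _; apply: ler_wpM2r => //; exact: ltW.
  have ew : rip (ip:=ip) w zz = rip (ip:=ip) w (C (L l t y)) + rip (ip:=ip) (C w) (L l t x - L l t y).
    rewrite (ripB hip) /rip -Csym // -Csym //; ring.
  have nw : hnorm ip w <= a + th.
    have := nrm_sub_le hip w zz; rewrite nrmB_sym // -/a; lra.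
  have q2 : rip (ip:=ip) w (C (L l t y)) <= (a + th) * b.
    apply: le_trans (CS hip _ _) _; apply: ler_wpM2r => //.
  have q3 : rip (ip:=ip) (C w) (L l t x - L l t y) <= eps / 4.
    apply: le_trans (CS hip _ _) _.
    have r3 : hnorm ip (C w) * hnorm ip (L l t x - L l t y) <= hnorm ip (C w) * (eps / (4 * (hnorm ip (C w) + 1))).
      by apply: ler_wpM2l; [exact: nrm_ge0 | exact: ltW].
    apply: le_trans r3 _.
    set k := eps / (4 * (hnorm ip (C w) + 1)).
    have h : k * (4 * (hnorm ip (C w) + 1)) = eps by rewrite /k divfK // gt_eqF.
    have := nrm_ge0 (ip:=ip) (C w); nra.
  have q4 : th * b <= th * M by apply: ler_wpM2l => //; exact: ltW.
  have q5 : a ^+ 2 <= a * b + eps / 2 by nra.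
  nra.
have Sum N eps : 0 < eps -> Near (fun y => \sum_(0 <= l < N) hnorm ip (C (L l t x)) ^+ 2 - eps
                        <= \sum_(0 <= l < N) hnorm ip (C (L l t y)) ^+ 2).
  elim: N eps => [|N IH] eps eps0.
    by exists 1 => // y _ _ _; rewrite !big_geq // sub0r oppr_le0 ltW.
  have e2 : 0 < eps / 2 by rewrite divr_gt0.
  have [e e0 he] := Near_and _ _ (IH _ e2) (LSC N _ e2).
  exists e => // y Dy h1 h2; have [p q] := he y Dy h1 h2.
  rewrite !big_nat_recr //=; lra.
rewrite -lee_suber_addl // -EFinB.
apply: series_le => [n|N]; first exact: sqr_ge0.
apply/ler_addgt0Pr => eps eps0.
have e2 : 0 < eps / 2 by rewrite divr_gt0.
have [y [Dy [p q]]] := Near_ex _ (Near_and _ _ (F2 _ e2) (Sum N _ e2)).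
have := F1 y N Dy; rewrite /B /= in p *; lra.
Qed.
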